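(* Let $(\Sigma_+,\Sigma_-,N_1,N_2,N_3)$ be a solution of the Wainwright–Hsu system satisfying the constraint, with $N_1=0$ and $N_2,N_3>0$. Then there is a constant $c>0$ such that $N_2(\tau)N_3(\tau)\geq c$ for all $\tau\in[0,\infty)$.
   Context: Wainwright–Hsu system: for functions $N_1,N_2,N_3,\Sigma_+,\Sigma_-$ of $\tau\in\mathbb{R}$ (prime denotes $d/d\tau$), $N_1'=(q-4\Sigma_+)N_1$, $N_2'=(q+2\Sigma_++2\sqrt3\Sigma_-)N_2$, $N_3'=(q+2\Sigma_+-2\sqrt3\Sigma_-)N_3$, $\Sigma_+'=-(2-q)\Sigma_+-3S_+$, $\Sigma_-'=-(2-q)\Sigma_--3S_-$, where $q=2(\Sigma_+^2+\Sigma_-^2)$, $S_+=\frac12[(N_2-N_3)^2-N_1(2N_1-N_2-N_3)]$, $S_-=\frac{\sqrt3}{2}(N_3-N_2)(N_1-N_2-N_3)$, together with the constraint $\Sigma_+^2+\Sigma_-^2+\frac34[N_1^2+N_2^2+N_3^2-2(N_1N_2+N_2N_3+N_1N_3)]=1$. Solutions exist for all $\tau\in\mathbb{R}$. *)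

(* Defs.v *)
From Stdlib Require Import Reals.
Open Scope R_scope.

Definition WH_q (Sp Sm : R) : R := 2 * (Sp ^ 2 + Sm ^ 2).

Definition WH_Splus (N1 N2 N3 : R) : R :=
  / 2 * ((N2 - N3) ^ 2 - N1 * (2 * N1 - N2 - N3)).

Definition WH_Sminus (N1 N2 N3 : R) : R :=
  sqrt 3 / 2 * (N3 - N2) * (N1 - N2 - N3).

Definition WH_solution (N1 N2 N3 Sp Sm : R -> R) : Prop :=
  (forall t, derivable_pt_lim N1 t
     ((WH_q (Sp t) (Sm t) - 4 * Sp t) * N1 t)) /\
  (forall t, derivable_pt_lim N2 t
     ((WH_q (Sp t) (Sm t) + 2 * Sp t + 2 * sqrt 3 * Sm t) * N2 t)) /\
  (forall t, derivable_pt_lim N3 t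
     ((WH_q (Sp t) (Sm t) + 2 * Sp t - 2 * sqrt 3 * Sm t) * N3 t)) /\
  (forall t, derivable_pt_lim Sp t
     (- (2 - WH_q (Sp t) (Sm t)) * Sp t - 3 * WH_Splus (N1 t) (N2 t) (N3 t))) /\
  (forall t, derivable_pt_lim Sm t
     (- (2 - WH_q (Sp t) (Sm t)) * Sm t - 3 * WH_Sminus (N1 t) (N2 t) (N3 t))) /\
  (forall t, Sp t ^ 2 + Sm t ^ 2
     + 3 / 4 * (N1 t ^ 2 + N2 t ^ 2 + N3 t ^ 2
                - 2 * (N1 t * N2 t + N2 t * N3 t + N1 t * N3 t)) = 1).

(* Main.v *)
Require Import Defs.
From Stdlib Require Import Reals Lra Psatz ClassicalEpsilon.
Open Scope R_scope.

Lemma D_mult f g x a b : derivable_pt_lim f x a -> derivable_pt_lim g x b ->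
  derivable_pt_lim (fun t => f t * g t) x (a * g x + f x * b).
Proof. intros. exact (derivable_pt_lim_mult f g x a b H H0). Qed.

Lemma D_plus f g x a b : derivable_pt_lim f x a -> derivable_pt_lim g x b ->
  derivable_pt_lim (fun t => f t + g t) x (a + b).
Proof. intros. exact (derivable_pt_lim_plus f g x a b H H0). Qed.

Lemma D_minus f g x a b : derivable_pt_lim f x a -> derivable_pt_lim g x b ->
  derivable_pt_lim (fun t => f t - g t) x (a - b).
Proof. intros. exact (derivable_pt_lim_minus f g x a b H H0). Qed.

Lemma D_scal c f x a : derivable_pt_lim f x a ->
  derivable_pt_lim (fun t => c * f t) x (c * a).
Proof. intros. exact (derivable_pt_lim_scal f c x a H). Qed.

Lemma D_div f g x a b : derivable_pt_lim f x a -> derivable_pt_lim g x b -> g x <> 0 ->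
  derivable_pt_lim (fun t => f t / g t) x ((a * g x - b * f x) / (g x)²).
Proof. intros. exact (derivable_pt_lim_div f g x a b H H0 H1). Qed.

Lemma D_ln f x a : derivable_pt_lim f x a -> 0 < f x ->
  derivable_pt_lim (fun t => ln (f t)) x (/ f x * a).
Proof. intros. exact (derivable_pt_lim_comp f ln x a (/ f x) H (derivable_pt_lim_ln _ H0)). Qed.

Lemma D_const c x : derivable_pt_lim (fun _ => c) x 0.
Proof. exact (derivable_pt_lim_const c x). Qed.

Lemma D_opp f x a : derivable_pt_lim f x a -> derivable_pt_lim (fun t => - f t) x (- a).
Proof. intros. exact (derivable_pt_lim_opp f x a H). Qed.

Lemma mono (f : R -> R) :
  (forall t, exists l, derivable_pt_lim f t l /\ 0 <= l) ->
  forall a b, a <= b -> f a <= f b.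
Proof.
  intros H.
  assert (pr : derivable f).
  { intro t. destruct (constructive_indefinite_description _ (H t)) as [l [Hl _]].
    exact (exist _ l Hl). }
  apply (nonneg_derivative_1 f pr).
  intro t. destruct (H t) as [l [Hl Hl0]].
  rewrite (derive_pt_eq_0 f t l (pr t) Hl). exact Hl0.
Qed.

Lemma mono_dec (f : R -> R) :
  (forall t, exists l, derivable_pt_lim f t l /\ l <= 0) ->
  forall a b, a <= b -> f b <= f a.
Proof.
  intros H a b Hab.
  assert (- f a <= - f b); [|lra].
  apply (mono (fun t => - f t)); auto.
  intro t. destruct (H t) as [l [Hl Hl0]]. exists (- l). split; [apply D_opp; auto|lra].
Qed.

Theorem mainTheorem10 (N1 N2 N3 Sp Sm : R -> R) :
  WH_solution N1 N2 N3 Sp Sm ->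
  (forall t, N1 t = 0) ->
  (forall t, 0 < N2 t) ->
  (forall t, 0 < N3 t) ->
  exists c : R, 0 < c /\ forall t, 0 <= t -> c <= N2 t * N3 t.
Proof.
  intros [H1 [H2 [H3 [H4 [H5 Hc]]]]] HN1 P2 P3.
  set (r := sqrt 3) in *.
  assert (Hr : r * r = 3) by (apply sqrt_sqrt; lra).
  assert (Hr0 : 0 < r) by (apply sqrt_lt_R0; lra).
  assert (Hc0 : forall t, Sp t ^ 2 + Sm t ^ 2 + 3/4 * (N2 t - N3 t) ^ 2 = 1).
  { intro t. rewrite <- (Hc t), HN1. ring. }
  assert (Hu : forall t, 0 <= 1 + Sp t).
  { intro t. pose proof (Hc0 t).
    assert (Sp t ^ 2 <= 1) by (pose proof (pow2_ge_0 (Sm t)); pose proof (pow2_ge_0 (N2 t - N3 t)); lra).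
    nra. }
  assert (HG : forall a b, a <= b ->
     (1 + Sp b) / (N2 b * N3 b) <= (1 + Sp a) / (N2 a * N3 a)).
  { apply (mono_dec (fun t => (1 + Sp t) / (N2 t * N3 t))).
    intro t. eexists. split.
    - apply (D_div (fun t => 1 + Sp t) (fun t => N2 t * N3 t)).
      + apply (D_plus (fun _ => 1) Sp). apply D_const. apply H4.
      + apply (D_mult N2 N3). apply H2. apply H3.
      + pose proof (P2 t); pose proof (P3 t); nra.
    - pose proof (P2 t); pose proof (P3 t); pose proof (Hc0 t); pose proof (Hu t).
      unfold WH_q, WH_Splus. rewrite HN1.
      set (P := N2 t * N3 t). assert (0 < P) by (unfold P; nra).
      set (u := 1 + Sp t).
      unfold Rsqr.
      assert (HD : (N2 t - N3 t) ^ 2 = 4/3 * (1 - Sp t ^ 2 - Sm t ^ 2)) by lra.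
      rewrite HD.
      match goal with |- ?a / ?b <= 0 => replace (a / b) with ((-2 * (Sm t ^ 2 + u ^ 2) * u) * / P) by (unfold u, P in *; field; lra) end.
      assert (0 < / P) by (apply Rinv_0_lt_compat; lra).
      assert (0 <= Sm t ^ 2 + u ^ 2) by nra.
      assert (0 <= (Sm t ^ 2 + u ^ 2) * u) by (apply Rmult_le_pos; auto).
      assert (0 <= (Sm t ^ 2 + u ^ 2) * u * / P) by (apply Rmult_le_pos; lra).
      lra. }
  assert (HF : forall a b, a <= b ->
     ln (N2 a * N3 a) - 2/3 * (Sm a * (r/2 * (N2 a - N3 a)) / (N2 a + N3 a)) <=
     ln (N2 b * N3 b) - 2/3 * (Sm b * (r/2 * (N2 b - N3 b)) / (N2 b + N3 b))).
  { apply (mono (fun t => ln (N2 t * N3 t) - 2/3 * (Sm t * (r/2 * (N2 t - N3 t)) / (N2 t + N3 t)))).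
    intro t. pose proof (P2 t); pose proof (P3 t). eexists. split.
    - apply (D_minus (fun t => ln (N2 t * N3 t)) (fun t => 2/3 * (Sm t * (r/2 * (N2 t - N3 t)) / (N2 t + N3 t)))).
      + apply (D_ln (fun t => N2 t * N3 t)). apply (D_mult N2 N3). apply H2. apply H3. nra.
      + apply (D_scal (2/3) (fun t => Sm t * (r/2 * (N2 t - N3 t)) / (N2 t + N3 t))).
        apply (D_div (fun t => Sm t * (r/2 * (N2 t - N3 t))) (fun t => N2 t + N3 t)).
        * apply (D_mult Sm (fun t => r/2 * (N2 t - N3 t))). apply H5.
          apply (D_scal (r/2) (fun t => N2 t - N3 t)). apply (D_minus N2 N3). apply H2. apply H3.
        * apply (D_plus N2 N3). apply H2. apply H3.
        * lra.
    - unfold WH_q, WH_Splus, WH_Sminus. rewrite HN1. unfold Rsqr. change (sqrt 3) with r.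
      pose proof (Hc0 t). pose proof (Hu t).
      set (x := Sm t) in *. set (S := N2 t + N3 t).
      set (z := x * (r/2 * (N2 t - N3 t)) / S).
      set (y2 := 3/4 * (N2 t - N3 t) ^ 2).
      set (u := 1 + Sp t).
      match goal with |- 0 <= ?l => assert (El : l + 2/3 * (r*r - 3) * x^2 =
         (2 * (2 * (Sp t ^ 2 + x ^ 2)) + 4 * Sp t - 2 * x^2 + 2 * (r * r / 4 * (N2 t - N3 t) ^ 2))
         + 2/3 * (2 - 2 * (Sp t ^ 2 + x ^ 2)) * z + 8/3 * z ^ 2) end.
      { unfold z, S. field. split; lra. }
      rewrite Hr in El. fold y2 in El.
      assert (E1 : 2 - 2 * (Sp t ^ 2 + x ^ 2) = 2 * y2) by (unfold y2; lra).
      assert (E2 : 2 * (2 * (Sp t ^ 2 + x ^ 2)) + 4 * Sp t - 2 * x^2 + 2 * y2 = 2 * u ^ 2)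
        by (unfold u, y2 in *; nra).
      assert (Hy : 0 <= y2) by (unfold y2; pose proof (pow2_ge_0 (N2 t - N3 t)); lra).
      assert (Hy2 : y2 <= 2 * u).
      { pose proof (pow2_ge_0 x). pose proof (pow2_ge_0 u). unfold u in *. lra. }
      assert (y2 * y2 <= 4 * u ^ 2) by nra.
      assert (0 <= (z + y2/4) ^ 2) by apply pow2_ge_0.
      assert (0 <= u ^ 2) by apply pow2_ge_0.
      assert (0 <= 2 * (2 * (Sp t ^ 2 + x ^ 2)) + 4 * Sp t - 2 * x ^ 2 + 2 * y2 +
        2 / 3 * (2 - 2 * (Sp t ^ 2 + x ^ 2)) * z + 8 / 3 * z ^ 2) by (rewrite E1, E2; nra).
      replace (3 - 3) with 0 in El by ring.
      rewrite Rmult_0_r, Rmult_0_l, Rplus_0_r in El. rewrite El. assumption. }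
  set (A := (1 + Sp 0) / (N2 0 * N3 0)).
  set (F0 := ln (N2 0 * N3 0) - 2/3 * (Sm 0 * (r/2 * (N2 0 - N3 0)) / (N2 0 + N3 0))).
  assert (HA : 0 <= A).
  { unfold A. pose proof (P2 0); pose proof (P3 0); pose proof (Hu 0).
    apply Rmult_le_pos; auto. left; apply Rinv_0_lt_compat; nra. }
  exists (exp (F0 - 2/3 * (1 + A/2))). split; [apply exp_pos|].
  intros t Ht.
  pose proof (P2 t); pose proof (P3 t); pose proof (Hu t); pose proof (Hc0 t).
  specialize (HG 0 t Ht). specialize (HF 0 t Ht). fold A in HG. fold F0 in HF.
  set (P := N2 t * N3 t) in *. set (S := N2 t + N3 t) in *.
  set (u := 1 + Sp t) in *. set (x := Sm t) in *.
  set (D := N2 t - N3 t) in *.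
  assert (HP : 0 < P) by (unfold P; nra).
  assert (HS : 0 < S) by (unfold S; lra).
  assert (HuP : u <= A * P).
  { unfold Rdiv in HG. apply (Rmult_le_compat_r P) in HG; [|lra].
    rewrite Rmult_assoc, Rinv_l, Rmult_1_r in HG; lra. }
  set (z := x * (r/2 * D) / S) in *.
  assert (Hzs : z * S = x * (r/2 * D)) by (unfold z; field; lra).
  assert (Hy2 : (r/2*D)^2 = 3/4 * D^2).
  { replace ((r/2*D)^2) with (r*r/4*D^2) by field. rewrite Hr. ring. }
  assert (HS2 : 4 * P <= S * S) by (pose proof (pow2_ge_0 D); unfold P, S, D in *; nra).
  assert (Hsum : x^2 + 3/4*D^2 <= 2 * u).
  { pose proof (pow2_ge_0 u). unfold u in *. lra. }
  assert (Hxy : (x * (r/2*D))^2 <= u^2).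
  { replace ((x * (r/2*D))^2) with (x^2 * (r/2*D)^2) by ring. rewrite Hy2.
    pose proof (pow2_ge_0 x); pose proof (pow2_ge_0 D).
    assert (x^2 * (3/4*D^2) <= ((x^2 + 3/4*D^2)/2)^2) by (pose proof (pow2_ge_0 (x^2 - 3/4*D^2)); nra).
    assert (0 <= x^2 + 3/4*D^2) by lra.
    assert (((x^2 + 3/4*D^2)/2)^2 <= u^2) by nra.
    lra. }
  assert (Hu2 : u ^ 2 <= 2 * A * P).
  { assert (u <= 2) by (pose proof (pow2_ge_0 x); pose proof (pow2_ge_0 D); unfold u in *; nra).
    assert (u * u <= u * (A * P)) by (apply Rmult_le_compat_l; auto).
    assert (0 <= A * P) by nra.
    nra. }
  assert (Hz2 : z^2 * (4 * P) <= z^2 * (S * S)) by (apply Rmult_le_compat_l; [apply pow2_ge_0|auto]).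
  assert (z^2 * (S*S) = (x * (r/2*D))^2) by (rewrite <- Hzs; ring).
  assert (Hz : z^2 <= A/2) by nra.
  assert (Hzl : - z <= 1 + A/2) by (pose proof (pow2_ge_0 (1+z)); nra).
  assert (HlnP : F0 - 2/3 * (1 + A/2) <= ln P).
  { fold z in HF. lra. }
  rewrite <- (exp_ln P) by auto.
  destruct HlnP as [h|h]; [left; apply exp_increasing; auto | right; rewrite h; auto].
Qed.
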